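(* Let $n\in\omega$ and let $\mathcal{F}$ be a fully $\Delta$-capturing construction scheme of type $\langle m_k,n_{k+1},r_{k+1}\rangle_{k\in\omega}$ with $n_{k+1}\geq 2^{m_k}$ for all $k$. With $e_\alpha$ defined as in the context, the set $\mathbb{E}_e=\{e_\alpha:\alpha\in\omega_1\}\subseteq\mathbb{Z}^\omega$, ordered lexicographically, is $2n$-entangled.
   Context: Construction schemes: a type is a sequence $\langle m_k,n_{k+1},r_{k+1}\rangle_{k\in\omega}$ with $m_0=1$, $n_{k+1}\geq2$, $m_k>r_{k+1}$, $m_{k+1}=r_{k+1}+(m_k-r_{k+1})n_{k+1}$. A construction scheme of this type is a family $\mathcal{F}$ of nonempty finite subsets of $\omega_1$, cofinal under $\subseteq$, each member of size $m_k$ for some $k$, such that with $\mathcal{F}_k=\{F\in\mathcal{F}:|F|=m_k\}$: (i) for $E,F\in\mathcal{F}_k$, $E\cap F$ is an initial segment of $E$ and of $F$; (ii) each $F\in\mathcal{F}_{k+1}$ is $F_0\cup\dots\cup F_{n_{k+1}-1}$ with $F_i\in\mathcal{F}_k$ a $\Delta$-system with root $R(F)$, $|R(F)|=r_{k+1}$, $R(F)<F_0\setminus R(F)<\dots<F_{n_{k+1}-1}\setminus R(F)$. Let $\rho(\alpha,\beta)=\min\{k:\exists F\in\mathcal{F}_k\ \{\alpha,\beta\}\subseteq F\}$, $\|\alpha\|_k=|\{\xi<\alpha:\rho(\alpha,\xi)\leq k\}|$, $\Delta(\alpha,\beta)=$ least $k$ with $\|\alpha\|_k\ne\|\beta\|_k$.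 $\Xi_\alpha(0)=0$ and for $k\geq1$, for any $F\in\mathcal{F}_k$ containing $\alpha$, $\Xi_\alpha(k)=-1$ if $\alpha\in R(F)$, $=i$ if $\alpha\in F_i\setminus R(F)$. For finite $X\subseteq\omega_1$, $X(i)$ is its $i$-th element. $\langle D_j\rangle_{j<N}\subseteq[\omega_1]^m$ ($N\geq2$) is $\Delta$-captured at level $l$ if it is a $\Delta$-system with root $R$ of size $r$, $R<D_j\setminus R$, tails pairwise $<$-comparable, $\Xi_{D_j(a)}(l)=-1$ for $a<r$ and $=j$ for $a\geq r$, and $\Delta(D_i(a),D_j(a))=l$ for $i\neq j$, $r\leq a<m$. $\mathcal{F}$ is fully $\Delta$-capturing if for every uncountable family $\mathcal{S}$ of finite subsets of $\omega_1$ there are infinitely many $l$ such that some $n_l$ members of $\mathcal{S}$ can be enumerated as a family $\Delta$-captured at level $l$. The functions: for each $k$, let $\langle C^k_i\rangle_{0<i<n_{k+1}}$ enumerate (possibly with repetitions) the set $[m_k\setminus r_{k+1}]^{\leq n}$ of subsets of $m_k\setminus r_{k+1}$ of size at most $n$. For $\alpha<\omega_1$ define $e_\alpha:\omega\to\mathbb{Z}$ by: $e_\alpha(k)=0$ if $\Xi_\alpha(k)\leq0$; $e_\alpha(k)=\Xi_\alpha(k)$ if $\Xi_\alpha(k)>0$ and $\|\alpha\|_{k-1}\in C^{k-1}_{\Xi_\alpha(k)}$; $e_\alpha(k)=\Xi_\alpha(k)$ if $\Xi_\alpha(k)>0$, $|C^{k-1}_{\Xi_\alpha(k)}|=n$ and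 $\|\alpha\|_{k-1}<\min C^{k-1}_{\Xi_\alpha(k)}$; $e_\alpha(k)=-\Xi_\alpha(k)$ otherwise. $\mathbb{Z}^\omega$ is ordered by $f<_{lex}g$ iff $f(k)<g(k)$ for the least $k$ with $f(k)\neq g(k)$. For a linear order, an uncountable subset $\mathbb{E}$ is $k$-entangled if for every $\tau:k\to2$ and every uncountable family $\mathcal{A}\subseteq[\mathbb{E}]^k$ of pairwise disjoint sets there are distinct $a,b\in\mathcal{A}$ with $a(i)<b(i)\iff\tau(i)=0$ for all $i<k$. *)

(* Defs.v *)
From Stdlib Require Import List ZArith Arith Sorted Lia ClassicalEpsilon.
Import ListNotations.

Definition countable_set {X : Type} (P : X -> Prop) : Prop :=
  exists f : X -> nat, forall x y, P x -> P y -> f x = f y -> x = y.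
Definition uncountable_set {X : Type} (P : X -> Prop) : Prop :=
  ~ countable_set P.

(* ---------- omega_1, up to order isomorphism ----------
   An uncountable well-order all of whose proper initial segments are
   countable. *)
Record is_omega1 {T : Type} (lt : T -> T -> Prop) : Prop := {
  o1_irrefl : forall x, ~ lt x x;
  o1_trans : forall x y z, lt x y -> lt y z -> lt x z;
  o1_total : forall x y, lt x y \/ x = y \/ lt y x;
  o1_wf : well_founded lt;
  o1_segments : forall a, countable_set (fun x => lt x a);
  o1_uncountable : uncountable_set (fun _ : T => True)
}.

(* Finite subsets of omega_1 are represented by strictly increasing lists;
   X(i) is then  nth_error X i. *)

(* m k = m_k ; nn (S k) = n_{k+1} ; r (S k) = r_{k+1} *)
Definition is_type (m nn r : nat -> nat) : Prop :=
  m 0 = 1 /\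
  forall k, 2 <= nn (S k) /\ r (S k) < m k /\
            m (S k) = r (S k) + (m k - r (S k)) * nn (S k).


Definition level {T : Type} (FF : list T -> Prop) (m : nat -> nat) (k : nat)
  (F : list T) : Prop := FF F /\ length F = m k.

Definition init_seg_in {T : Type} (lt : T -> T -> Prop) (E F : list T) : Prop :=
  forall x y, In x E -> In y E -> In y F -> lt x y -> In x F.

(* F in F_{k+1} is G 0 \cup ... \cup G (n_{k+1}-1), with G i in F_k forming a
   Delta-system with root R, |R| = r_{k+1},
   R < G 0 \ R < ... < G (n_{k+1}-1) \ R *)
Definition decomposition {T : Type} (lt : T -> T -> Prop) (FF : list T -> Prop)
  (m nn r : nat -> nat) (k : nat) (F : list T) (G : nat -> list T) (R : list T)
  : Prop :=
  (forall i, i < nn (S k) -> level FF m k (G i)) /\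
  NoDup R /\ length R = r (S k) /\
  (forall i j x, i < nn (S k) -> j < nn (S k) -> i <> j ->
     (In x (G i) /\ In x (G j) <-> In x R)) /\
  (forall i x y, i < nn (S k) -> In x R -> In y (G i) -> ~ In y R -> lt x y) /\
  (forall i j x y, i < j -> j < nn (S k) ->
     In x (G i) -> ~ In x R -> In y (G j) -> ~ In y R -> lt x y) /\
  (forall x, In x F <-> exists i, i < nn (S k) /\ In x (G i)).

Definition construction_scheme {T : Type} (lt : T -> T -> Prop)
  (m nn r : nat -> nat) (FF : list T -> Prop) : Prop :=
  is_type m nn r /\
  (forall F, FF F -> F <> [] /\ StronglySorted lt F /\ exists k, length F = m k) /\
  (forall A : list T, exists F, FF F /\ incl A F) /\
  (forall k E F, level FF m k E -> level FF m k F ->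
     init_seg_in lt E F /\ init_seg_in lt F E) /\
  (forall k F, level FF m (S k) F -> exists G R, decomposition lt FF m nn r k F G R).

Definition rho_rel {T : Type} (FF : list T -> Prop) (m : nat -> nat)
  (a b : T) (k : nat) : Prop :=
  (exists F, level FF m k F /\ In a F /\ In b F) /\
  (forall j, j < k -> ~ exists F, level FF m j F /\ In a F /\ In b F).

Definition rho {T : Type} (FF : list T -> Prop) (m : nat -> nat) (a b : T) : nat :=
  epsilon (inhabits 0) (rho_rel FF m a b).

Definition card_rel {X : Type} (P : X -> Prop) (c : nat) : Prop :=
  exists l, NoDup l /\ (forall x, In x l <-> P x) /\ length l = c.

Definition card {X : Type} (P : X -> Prop) : nat := epsilon (inhabits 0) (card_rel P).

Definition norm {T : Type} (lt : T -> T -> Prop) (FF : list T -> Prop)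
  (m : nat -> nat) (a : T) (k : nat) : nat :=
  card (fun x => lt x a /\ rho FF m a x <= k).

Definition Delta {T : Type} (lt : T -> T -> Prop) (FF : list T -> Prop)
  (m : nat -> nat) (a b : T) : nat :=
  epsilon (inhabits 0) (fun k => norm lt FF m a k <> norm lt FF m b k /\
                                 forall j, j < k -> norm lt FF m a j = norm lt FF m b j).

Definition Xi_rel {T : Type} (lt : T -> T -> Prop) (FF : list T -> Prop)
  (m nn r : nat -> nat) (a : T) (k : nat) (v : Z) : Prop :=
  (k = 0 /\ v = 0%Z) \/
  exists k', k = S k' /\ exists F G R,
    level FF m (S k') F /\ In a F /\ decomposition lt FF m nn r k' F G R /\
    ((In a R /\ v = (-1)%Z) \/
     (~ In a R /\ exists i, i < nn (S k') /\ In a (G i) /\ v = Z.of_nat i)).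

Definition Xi {T : Type} (lt : T -> T -> Prop) (FF : list T -> Prop)
  (m nn r : nat -> nat) (a : T) (k : nat) : Z :=
  epsilon (inhabits 0%Z) (Xi_rel lt FF m nn r a k).

Definition Delta_captured {T : Type} (lt : T -> T -> Prop) (FF : list T -> Prop)
  (m nn r : nat -> nat) (l N : nat) (D : nat -> list T) : Prop :=
  2 <= N /\ exists (mm rr : nat) (R : list T),
   (forall j, j < N -> length (D j) = mm /\ StronglySorted lt (D j)) /\
   NoDup R /\ length R = rr /\
   (forall i j x, i < N -> j < N -> i <> j -> (In x (D i) /\ In x (D j) <-> In x R)) /\
   (forall j x y, j < N -> In x R -> In y (D j) -> ~ In y R -> lt x y) /\
   (forall i j, i < N -> j < N -> i <> j ->
      (forall x y, In x (D i) -> ~ In x R -> In y (D j) -> ~ In y R -> lt x y) \/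
      (forall x y, In x (D i) -> ~ In x R -> In y (D j) -> ~ In y R -> lt y x)) /\
   (forall j a x, j < N -> nth_error (D j) a = Some x ->
      (a < rr -> Xi lt FF m nn r x l = (-1)%Z) /\
      (rr <= a -> Xi lt FF m nn r x l = Z.of_nat j)) /\
   (forall i j a x y, i < N -> j < N -> i <> j -> rr <= a ->
      nth_error (D i) a = Some x -> nth_error (D j) a = Some y ->
      Delta lt FF m x y = l).

Definition fully_Delta_capturing {T : Type} (lt : T -> T -> Prop)
  (FF : list T -> Prop) (m nn r : nat -> nat) : Prop :=
  forall S : list T -> Prop,
    (forall s, S s -> StronglySorted lt s) ->
    uncountable_set S ->
    forall L, exists l, L < l /\ exists D : nat -> list T,
      (forall j, j < nn l -> S (D j)) /\
      (forall i j, i < nn l -> j < nn l -> D i = D j -> i = j) /\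
      Delta_captured lt FF m nn r l (nn l) D.

(* subsets of m_k \ r_{k+1} = {r_{k+1}, ..., m_k - 1} of size <= nE,
   represented as strictly increasing lists *)
Definition small_subset (m r : nat -> nat) (nE k : nat) (s : list nat) : Prop :=
  StronglySorted Nat.lt s /\ (forall x, In x s -> r (S k) <= x < m k) /\
  length s <= nE.

(* <C k i>_{0 < i < n_{k+1}} enumerates (with repetitions) [m_k \ r_{k+1}]^{<= nE} *)
Definition valid_enum (m nn r : nat -> nat) (nE : nat) (C : nat -> nat -> list nat)
  : Prop :=
  forall k,
    (forall i, 0 < i < nn (S k) -> small_subset m r nE k (C k i)) /\
    (forall s, small_subset m r nE k s -> exists i, 0 < i < nn (S k) /\ C k i = s).

Definition e_fun {T : Type} (lt : T -> T -> Prop) (FF : list T -> Prop)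
  (m nn r : nat -> nat) (nE : nat) (C : nat -> nat -> list nat) (a : T) (k : nat)
  : Z :=
  let x := Xi lt FF m nn r a k in
  if Z.leb x 0 then 0%Z else
  let Ck := C (Nat.pred k) (Z.to_nat x) in
  let na := norm lt FF m a (Nat.pred k) in
  if existsb (Nat.eqb na) Ck then x
  else if andb (Nat.eqb (length Ck) nE) (forallb (fun c => Nat.ltb na c) Ck) then x
  else (- x)%Z.

Definition lex_lt (f g : nat -> Z) : Prop :=
  exists k, (forall j, j < k -> f j = g j) /\ (f k < g k)%Z.

Definition entangled {X : Type} (ltX : X -> X -> Prop) (E : X -> Prop) (kk : nat)
  : Prop :=
  uncountable_set E /\
  forall (tau : nat -> bool) (A : list X -> Prop),
    (forall a, A a -> length a = kk /\ StronglySorted ltX a /\ forall x, In x a -> E x) ->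
    (forall a b, A a -> A b -> a <> b -> forall x, In x a -> ~ In x b) ->
    uncountable_set A ->
    exists a b, A a /\ A b /\ a <> b /\
      forall i x y, i < kk -> nth_error a i = Some x -> nth_error b i = Some y ->
        (ltX x y <-> tau i = false).

(* Main.v *)
Require Import Defs.
From Stdlib Require Import List ZArith Arith Lia Sorted Classical ClassicalEpsilon Cantor.
Import ListNotations.

Lemma SS_app_iff {A} (R : A -> A -> Prop) (l1 l2 : list A) :
  StronglySorted R (l1 ++ l2) <->
  StronglySorted R l1 /\ StronglySorted R l2 /\
  (forall a b, In a l1 -> In b l2 -> R a b).
Proof.
  induction l1 as [|x l1 IH]; simpl.
  - split; [intros H; split; [constructor|split; auto; tauto] | tauto].
  - split.
    + intros H; apply StronglySorted_inv in H as [H1 H2].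
      apply IH in H1 as [Ha [Hb Hc]].
      rewrite Forall_forall in H2.
      repeat split; auto.
      * constructor; auto. rewrite Forall_forall; intros; apply H2, in_or_app; auto.
      * intros a b [<-|Ha'] Hb'; auto. apply H2, in_or_app; auto.
    + intros [H1 [H2 H3]]. apply StronglySorted_inv in H1 as [H1a H1b].
      constructor.
      * apply IH; repeat split; auto.
      * rewrite Forall_forall in *; intros y Hy; apply in_app_or in Hy as [Hy|Hy]; auto.
Qed.

Lemma SS_filter {A} (R : A -> A -> Prop) f l :
  StronglySorted R l -> StronglySorted R (filter f l).
Proof.
  induction 1 as [|a l H IH HF]; simpl; [constructor|].
  destruct (f a); auto. constructor; auto.
  rewrite Forall_forall in *; intros y Hy; apply filter_In in Hy; apply HF; tauto.
Qed.

Lemma SS_seq a n : StronglySorted Nat.lt (seq a n).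
Proof.
  revert a; induction n; intros a; simpl; constructor; auto.
  rewrite Forall_forall; intros y Hy; apply in_seq in Hy; lia.
Qed.

Lemma SS_NoDup {A} (R : A -> A -> Prop) l :
  (forall x, ~ R x x) -> StronglySorted R l -> NoDup l.
Proof.
  intros Hirr; induction 1 as [|a l H IH HF]; constructor; auto.
  intros Hin; rewrite Forall_forall in HF; apply (Hirr a); auto.
Qed.

Lemma NoDup_same_len {A} (l1 l2 : list A) :
  NoDup l1 -> NoDup l2 -> (forall x, In x l1 <-> In x l2) -> length l1 = length l2.
Proof.
  intros H1 H2 H. apply Nat.le_antisymm; apply NoDup_incl_length; auto;
  intros x; apply H.
Qed.

Section Ord.
Set Default Proof Using "All".
Context {A : Type} (R : A -> A -> Prop)
  (Hirr : forall x, ~ R x x) (Htr : forall x y z, R x y -> R y z -> R x z)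
  (Htot : forall x y, R x y \/ x = y \/ R y x).

Lemma sorted_unique l1 l2 :
  StronglySorted R l1 -> StronglySorted R l2 -> (forall x, In x l1 <-> In x l2) -> l1 = l2.
Proof.
  revert l2; induction l1 as [|a l1 IH]; intros l2 H1 H2 H.
  - destruct l2 as [|b l2]; auto. exfalso; apply (proj2 (H b)); simpl; auto.
  - destruct l2 as [|b l2]. { exfalso; apply (proj1 (H a)); simpl; auto. }
    apply StronglySorted_inv in H1 as [H1 F1]; apply StronglySorted_inv in H2 as [H2 F2].
    rewrite Forall_forall in F1, F2.
    assert (a = b).
    { destruct (proj1 (H a) (or_introl eq_refl)) as [->|Ha]; auto.
      destruct (proj2 (H b) (or_introl eq_refl)) as [->|Hb]; auto.
      exfalso; apply (Hirr a); apply Htr with b; auto. }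
    subst b; f_equal; apply IH; auto.
    intros x; split; intros Hx.
    + destruct (proj1 (H x) (or_intror Hx)) as [->|]; auto.
      exfalso; apply (Hirr x); auto.
    + destruct (proj2 (H x) (or_intror Hx)) as [->|]; auto.
      exfalso; apply (Hirr x); auto.
Qed.

Lemma insert_exists x s : StronglySorted R s ->
  exists s', StronglySorted R s' /\ forall y, In y s' <-> y = x \/ In y s.
Proof.
  induction 1 as [|h s H IH HF].
  - exists [x]; split; [repeat constructor|]. simpl; intuition.
  - destruct (Htot x h) as [Hxh|[<-|Hhx]].
    + exists (x :: h :: s); split.
      * constructor; [constructor; auto|].
        constructor; auto. rewrite Forall_forall in *; intros; eauto.
      * simpl; intuition.
    + exists (x :: s); split; [constructor; auto|]; simpl; intuition.
    + destruct IH as [s3 [Hs3 Hm]]. exists (h :: s3); split.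
      * constructor; auto. rewrite Forall_forall in *; intros y Hy.
        apply Hm in Hy as [->|Hy]; auto.
      * intros y; simpl; rewrite Hm; intuition.
Qed.

Lemma sort_exists l : exists s, StronglySorted R s /\ forall x, In x s <-> In x l.
Proof.
  induction l as [|x l IH].
  - exists []; split; [constructor|simpl; tauto].
  - destruct IH as [s [Hs Hm]]. destruct (insert_exists x s Hs) as [s' [Hs' Hm']].
    exists s'; split; auto. intros y; rewrite Hm', Hm; simpl; intuition.
Qed.

Lemma max_exists l : l <> [] -> exists f, In f l /\ forall x, In x l -> x = f \/ R x f.
Proof.
  induction l as [|a l IH]; intros Hne; [congruence|].
  destruct l as [|b l'].
  - exists a; simpl; intuition.
  - destruct IH as [f [Hf Hm]]; [discriminate|].
    destruct (Htot a f) as [Haf|[<-|Hfa]].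
    + exists f; split; [right; auto|]. intros x [<-|Hx]; auto.
    + exists a; split; [left; auto|]. intros x [<-|Hx]; auto.
    + exists a; split; [left; auto|]. intros x [<-|Hx]; auto.
      destruct (Hm x Hx) as [->|]; eauto.
Qed.

Lemma prefix_split G (P : A -> Prop) :
  StronglySorted R G ->
  (forall y z, P y -> In z G -> ~ P z -> R y z) ->
  exists L1 L2, G = L1 ++ L2 /\ (forall y, In y L1 -> P y) /\ (forall z, In z L2 -> ~ P z).
Proof.
  induction 1 as [|h s H IH HF]; intros Hp.
  - exists [], []; simpl; intuition.
  - destruct (classic (P h)) as [Ph|nPh].
    + destruct IH as [L1 [L2 [E [H1 H2]]]].
      { intros y z Py Hz nPz; apply Hp; simpl; auto. }
      exists (h :: L1), L2; subst; simpl; intuition (subst; auto).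
    + exists [], (h :: s); simpl; split; auto; split; [tauto|].
      intros z [<-|Hz] Pz; [exact (nPh Pz)|].
      rewrite Forall_forall in HF.
      apply (Hirr h); apply Htr with z; [apply HF; exact Hz|].
      apply Hp; simpl; auto.
Qed.

End Ord.

Lemma least_ex (P : nat -> Prop) : (exists n, P n) -> exists n, P n /\ forall j, j < n -> ~ P j.
Proof.
  intros [n Hn]. induction n as [n IH] using (well_founded_induction lt_wf).
  destruct (classic (exists j, j < n /\ P j)) as [[j [Hj Pj]]|Hno].
  - apply (IH j Hj Pj).
  - exists n; split; auto. intros j Hj Pj; apply Hno; eauto.
Qed.

Lemma nth_error_pos_eq {A} (F L1 L2 L1' L2' : list A) x y :
  F = L1 ++ x :: L2 -> F = L1' ++ y :: L2' -> length L1 = length L1' -> x = y.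
Proof.
  intros E1 E2 HL.
  assert (nth_error F (length L1) = Some x) by (subst; rewrite nth_error_app2, Nat.sub_diag; auto).
  assert (nth_error F (length L1') = Some y) by (rewrite E2, nth_error_app2, Nat.sub_diag; auto).
  congruence.
Qed.

Lemma pigeon {X : Type} (S : X -> Prop) (g : X -> nat) :
  uncountable_set S -> exists c, uncountable_set (fun x => S x /\ g x = c).
Proof.
  intros HU. apply NNPP; intros Hno.
  assert (Hall : forall c, countable_set (fun x => S x /\ g x = c)).
  { intros c. apply NNPP; intros Hc; apply Hno; exists c; exact Hc. }
  apply HU.
  set (F := fun c => epsilon (inhabits (fun _ : X => 0))
         (fun f => forall u v, (S u /\ g u = c) -> (S v /\ g v = c) -> f u = f v -> u = v)).
  exists (fun x => Cantor.to_nat (g x, F (g x) x)).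
  intros x y Hx Hy E.
  apply (f_equal Cantor.of_nat) in E. rewrite !Cantor.cancel_of_to in E.
  injection E as E1 E2.
  assert (HF := epsilon_spec (inhabits (fun _ : X => 0))
         (fun f => forall u v, (S u /\ g u = g y) -> (S v /\ g v = g y) -> f u = f v -> u = v)
         (Hall (g y))).
  simpl in HF. apply HF; auto. fold (F (g y)). rewrite <- E1 at 1. auto.
Qed.

Fixpoint encl (l : list nat) : nat :=
  match l with [] => 0 | x :: l => S (Cantor.to_nat (x, encl l)) end.

Lemma encl_inj l1 l2 : encl l1 = encl l2 -> l1 = l2.
Proof.
  revert l2; induction l1 as [|x l1 IH]; intros [|y l2] E; try discriminate; auto.
  change (S (Cantor.to_nat (x, encl l1)) = S (Cantor.to_nat (y, encl l2))) in E.
  assert (E' : Cantor.to_nat (x, encl l1) = Cantor.to_nat (y, encl l2)) by congruence.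
  apply (f_equal Cantor.of_nat) in E'. rewrite !Cantor.cancel_of_to in E'.
  injection E' as -> E'. f_equal; auto.
Qed.

Lemma filter_compl_len {A} (f : A -> bool) l :
  length (filter f l) + length (filter (fun x => negb (f x)) l) = length l.
Proof. induction l as [|a l IH]; simpl; auto. destruct (f a); simpl; lia. Qed.

Lemma argmin_ex (f : nat -> nat) N : 0 < N -> exists i0, i0 < N /\ forall i, i < N -> f i0 <= f i.
Proof.
  induction N as [|N IH]; intros H; [lia|].
  destruct N as [|N]. { exists 0; split; auto; intros i Hi; assert (i = 0) by lia; subst; auto. }
  destruct IH as [i0 [Hi0 Hm]]; [lia|].
  destruct (le_lt_dec (f i0) (f (S N))).
  - exists i0; split; [lia|]. intros i Hi. destruct (Nat.eq_dec i (S N)); [subst; auto|apply Hm; lia].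
  - exists (S N); split; [lia|]. intros i Hi. destruct (Nat.eq_dec i (S N)); [subst; auto|].
    specialize (Hm i ltac:(lia)); lia.
Qed.

Lemma lex_decide (f g : nat -> Z) l : (forall k, k < l -> f k = g k) -> (f l < g l)%Z ->
  lex_lt f g /\ ~ lex_lt g f.
Proof.
  intros Hb Hl. split; [exists l; auto|].
  intros [k [Hk Hlt]]. destruct (lt_eq_lt_dec k l) as [[H|H]|H].
  - rewrite (Hb k H) in Hlt; lia.
  - subst; lia.
  - rewrite (Hk l H) in Hl; lia.
Qed.

Lemma lex_irrefl f : ~ lex_lt f f.
Proof. intros [k [_ H]]; lia. Qed.

Section Scheme.
Variables (T : Type) (lt : T -> T -> Prop) (m nn r : nat -> nat) (FF : list T -> Prop).
Hypothesis Ho : is_omega1 lt.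
Hypothesis Hcs : construction_scheme lt m nn r FF.

Let irr := o1_irrefl lt Ho.
Let trn := o1_trans lt Ho.
Let tot := o1_total lt Ho.

Lemma lt_asym x y : lt x y -> ~ lt y x.
Proof. intros H1 H2; apply (irr x); eauto. Qed.

Lemma type_facts : m 0 = 1 /\ forall k, 2 <= nn (S k) /\ r (S k) < m k /\
            m (S k) = r (S k) + (m k - r (S k)) * nn (S k).
Proof. destruct Hcs as [H _]; exact H. Qed.

Lemma m_S k : m k < m (S k).
Proof. destruct (proj2 type_facts k) as [H1 [H2 H3]]. rewrite H3. nia. Qed.

Lemma m_mono k h : k <= h -> m k <= m h.
Proof. induction 1; auto. pose proof (m_S m0); lia. Qed.

Lemma m_lt_inv k h : m k < m h -> k < h.
Proof. intros H. destruct (le_lt_dec h k) as [Hle|]; auto. apply m_mono in Hle; lia. Qed.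

Lemma FF_props F : FF F -> F <> [] /\ StronglySorted lt F /\ exists k, length F = m k.
Proof. destruct Hcs as [_ [H _]]; auto. Qed.

Lemma cofinal X : exists F, FF F /\ incl X F.
Proof. destruct Hcs as [_ [_ [H _]]]; auto. Qed.

Lemma coherent k E F : level FF m k E -> level FF m k F -> init_seg_in lt E F.
Proof. destruct Hcs as [_ [_ [_ [H _]]]]; intros H0 H1; apply (proj1 (H k E F H0 H1)). Qed.

Lemma decomp k F : level FF m (S k) F -> exists G R, decomposition lt FF m nn r k F G R.
Proof. destruct Hcs as [_ [_ [_ [_ H]]]]; auto. Qed.

Lemma lvl_sorted k F : level FF m k F -> StronglySorted lt F.
Proof. intros [H _]; apply FF_props; auto. Qed.

Lemma lvl_nodup k F : level FF m k F -> NoDup F.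
Proof. intros H; apply (SS_NoDup lt); auto. apply (lvl_sorted k); auto. Qed.

Lemma down_step k F x : level FF m (S k) F -> In x F ->
  exists E, level FF m k E /\ incl E F /\ In x E.
Proof.
  intros HF Hx. destruct (decomp k F HF) as [G [R D]].
  destruct D as [D1 [_ [_ [_ [_ [_ D7]]]]]].
  destruct (proj1 (D7 x) Hx) as [i [Hi Hxi]].
  exists (G i); split; auto; split; auto.
  intros y Hy; apply D7; eauto.
Qed.

Lemma down h k F x : level FF m h F -> k <= h -> In x F ->
  exists E, level FF m k E /\ incl E F /\ In x E.
Proof.
  intros HF Hkh; revert F x HF. induction Hkh as [|h Hkh IH]; intros F x HF Hx.
  - exists F; split; auto; split; auto. intros y; auto.
  - destruct (down_step h F x HF Hx) as [E [HE [Hi Hx']]].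
    destruct (IH E x HE Hx') as [E' [HE' [Hi' Hx'']]].
    exists E'; split; auto; split; auto. intros y Hy; auto.
Qed.

Lemma fresh (X : list T) : exists z, ~ In z X.
Proof.
  apply NNPP; intros Hn.
  apply (o1_uncountable lt Ho).
  exists (fun x => epsilon (inhabits 0) (fun i => nth_error X i = Some x)).
  intros x y _ _ E.
  assert (Hx : In x X) by (apply NNPP; intros H; apply Hn; eauto).
  assert (Hy : In y X) by (apply NNPP; intros H; apply Hn; eauto).
  apply In_nth_error in Hx, Hy.
  pose proof (epsilon_spec (inhabits 0) (fun i => nth_error X i = Some x) Hx) as Ex.
  pose proof (epsilon_spec (inhabits 0) (fun i => nth_error X i = Some y) Hy) as Ey.
  simpl in Ex, Ey. rewrite E in Ex. congruence.
Qed.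

Lemma same_level_incl k F E f : level FF m k F -> level FF m k E ->
  In f F -> In f E -> (forall x, In x F -> x = f \/ lt x f) -> incl F E.
Proof.
  intros HF HE Hf HfE Hmax x Hx.
  destruct (Hmax x Hx) as [->|H]; auto.
  apply (coherent k F E HF HE x f); auto.
Qed.

Lemma up_step k F : level FF m k F -> exists F', level FF m (S k) F' /\ incl F F'.
Proof.
  intros HF. destruct (fresh F) as [z Hz].
  destruct (cofinal (z :: F)) as [H [HH Hinc]].
  destruct (FF_props H HH) as [_ [HsH [h Hh]]].
  assert (Hlen : S (m k) <= m h).
  { pose proof HF as [HFF HFl]. rewrite <- HFl, <- Hh.
    change (S (length F)) with (length (z :: F)).
    apply NoDup_incl_length; [constructor; [exact Hz|apply (lvl_nodup k); split; auto]|exact Hinc].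
 }
  assert (Hkh : S k <= h) by (apply m_lt_inv; lia).
  assert (HFne : F <> []) by (apply (FF_props F (proj1 HF))).
  destruct (max_exists lt irr trn tot F HFne) as [f [Hf Hmax]].
  destruct (down h (S k) H f (conj HH Hh) Hkh (Hinc f (or_intror Hf))) as [E' [HE' [_ HfE']]].
  destruct (down_step k E' f HE' HfE') as [E [HE [HEi HfE]]].
  exists E'; split; auto. intros x Hx. apply HEi.
  apply (same_level_incl k F E f); auto.
Qed.

Lemma up k h F : level FF m k F -> k <= h -> exists F', level FF m h F' /\ incl F F'.
Proof.
  intros HF Hkh; induction Hkh as [|h Hkh IH].
  - exists F; split; auto; intros y; auto.
  - destruct IH as [F1 [H1 I1]]. destruct (up_step h F1 H1) as [F2 [H2 I2]].
    exists F2; split; auto. intros y Hy; auto.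
Qed.

Lemma in_level_set X : exists k F, level FF m k F /\ incl X F.
Proof.
  destruct (cofinal X) as [F [HF Hi]]. destruct (FF_props F HF) as [_ [_ [k Hk]]].
  exists k, F; split; auto; split; auto.
Qed.

Lemma in_some_level x k : exists F, level FF m k F /\ In x F.
Proof.
  destruct (in_level_set [x]) as [h [F [HF Hi]]].
  assert (Hx : In x F) by (apply Hi; simpl; auto).
  destruct (le_lt_dec k h) as [Hkh|Hhk].
  - destruct (down h k F x HF Hkh Hx) as [E [HE [_ HxE]]]; eauto.
  - destruct (up h k F HF) as [F' [HF' Hi']]; [lia|]. eauto.
Qed.

Lemma rho_spec x y : rho_rel FF m x y (rho FF m x y).
Proof.
  unfold rho. apply epsilon_spec.
  destruct (in_level_set [x; y]) as [h [F [HF Hi]]].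
  destruct (least_ex (fun k => exists F, level FF m k F /\ In x F /\ In y F)) as [k [Hk Hl]].
  { exists h, F; split; auto; split; apply Hi; simpl; auto. }
  exists k; split; auto.
Qed.

Lemma rho_le k F x y : level FF m k F -> In x F -> In y F -> rho FF m x y <= k.
Proof.
  intros HF Hx Hy. destruct (rho_spec x y) as [_ H].
  destruct (le_lt_dec (rho FF m x y) k); auto. exfalso; apply (H k); eauto.
Qed.

Lemma rho_le_inv k x y : rho FF m x y <= k ->
  exists F, level FF m k F /\ In x F /\ In y F.
Proof.
  intros Hle. destruct (rho_spec x y) as [[E [HE [Hx Hy]]] _].
  destruct (up _ k E HE Hle) as [F [HF Hi]]. exists F; auto.
Qed.

Lemma SS_app_lt (L1 L2 : list T) a b : StronglySorted lt (L1 ++ L2) -> In a L1 -> In b L2 -> lt a b.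
Proof. intros H; apply SS_app_iff in H; apply H. Qed.

Lemma norm_pos k F x L1 L2 : level FF m k F -> F = L1 ++ x :: L2 -> norm lt FF m x k = length L1.
Proof.
  intros HF E. unfold norm, card.
  assert (Hs := lvl_sorted k F HF).
  assert (Hnd := lvl_nodup k F HF).
  assert (Hmem : forall z, In z L1 <-> lt z x /\ rho FF m x z <= k).
  { intros z; split.
    - intros Hz. split.
      + subst F. apply (SS_app_lt L1 (x :: L2)); simpl; auto.
      + apply (rho_le k F); [exact HF| |]; subst F; apply in_or_app; simpl; auto.
    - intros [Hzx Hr]. destruct (rho_le_inv k x z Hr) as [E' [HE' [HxE HzE]]].
      assert (HzF : In z F).
      { apply (coherent k E' F HE' HF z x); auto. subst F; apply in_or_app; simpl; auto. }
      subst F. apply in_app_or in HzF as [H|[H|H]]; auto.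
      + subst z; exfalso; apply (irr x); auto.
      + exfalso. apply (lt_asym z x); auto.
        apply SS_app_iff in Hs as [_ [Hs2 _]]. apply StronglySorted_inv in Hs2 as [_ Hf].
        rewrite Forall_forall in Hf; auto.
  }
  assert (HL1 : StronglySorted lt L1) by (subst F; apply SS_app_iff in Hs; apply Hs).
  assert (Hc : card_rel (fun z => lt z x /\ rho FF m x z <= k) (length L1)).
  { exists L1; split; [apply (SS_NoDup lt); auto|split; auto]. }
  pose proof (epsilon_spec (inhabits 0) (card_rel (fun z => lt z x /\ rho FF m x z <= k)) (ex_intro _ _ Hc)) as Hsp.
  destruct Hsp as [l' [Hnd' [Hm' Hl']]].
  rewrite <- Hl'. symmetry. apply NoDup_same_len; auto. apply (SS_NoDup lt); auto.
  intros z; rewrite Hm', Hmem; tauto.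
Qed.


Lemma ccat_in (Q : nat -> list T) i z :
  In z (concat (map Q (seq 0 i))) <-> exists t, t < i /\ In z (Q t).
Proof.
  rewrite in_concat. split.
  - intros [l [Hl Hz]]. apply in_map_iff in Hl as [t [<- Ht]]. apply in_seq in Ht.
    exists t; split; auto; lia.
  - intros [t [Ht Hz]]. exists (Q t); split; auto. apply in_map, in_seq; lia.
Qed.

Lemma ccat_S (Q : nat -> list T) i :
  concat (map Q (seq 0 (S i))) = concat (map Q (seq 0 i)) ++ Q i.
Proof. rewrite seq_S, map_app, concat_app; simpl; rewrite app_nil_r; auto. Qed.

Lemma ccat_len (Q : nat -> list T) c i :
  (forall t, t < i -> length (Q t) = c) -> length (concat (map Q (seq 0 i))) = i * c.
Proof.
  induction i; intros H; auto. rewrite ccat_S, length_app, IHi, H; [lia|lia|].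
  intros; apply H; lia.
Qed.

Lemma ccat_split (Q : nat -> list T) i n : i < n ->
  exists rest, concat (map Q (seq 0 n)) = concat (map Q (seq 0 i)) ++ Q i ++ rest.
Proof.
  intros H. replace n with (S i + (n - S i)) by lia.
  rewrite seq_app, map_app, concat_app, ccat_S, <- app_assoc.
  eexists; eauto.
Qed.

Lemma decomp_struct k F G R : level FF m (S k) F -> decomposition lt FF m nn r k F G R ->
  exists P, StronglySorted lt P /\ (forall y, In y P <-> In y R) /\ length P = r (S k) /\
  (forall t, t < nn (S k) ->
     G t = P ++ skipn (length P) (G t) /\
     length (skipn (length P) (G t)) = m k - r (S k) /\
     (forall z, In z (skipn (length P) (G t)) -> ~ In z R)) /\
  F = P ++ concat (map (fun t => skipn (length P) (G t)) (seq 0 (nn (S k)))).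
Proof.
  intros HF HD. pose proof HD as [D1 [D2 [D3 [D4 [D5 [D6 D7]]]]]].
  assert (Hn : 2 <= nn (S k)) by apply (proj2 type_facts k).
  assert (RinG : forall t y, t < nn (S k) -> In y R -> In y (G t)).
  { intros t y Ht Hy. set (j := if Nat.eqb t 0 then 1 else 0).
    assert (Hj : j < nn (S k) /\ t <> j) by (unfold j; destruct (Nat.eqb_spec t 0); lia).
    apply (proj2 (D4 t j y Ht (proj1 Hj) (proj2 Hj)) Hy). }
  assert (Hpre : forall t, t < nn (S k) -> exists L1 L2, G t = L1 ++ L2 /\
     StronglySorted lt L1 /\ (forall y, In y L1 <-> In y R) /\ (forall z, In z L2 -> ~ In z R)).
  { intros t Ht. assert (Hs := lvl_sorted k (G t) (D1 t Ht)).
    destruct (prefix_split lt irr trn tot (G t) (fun y => In y R) Hs) as [L1 [L2 [E [H1 H2]]]].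
    { intros y z Hy Hz Hnz; apply (D5 t); auto. }
    exists L1, L2; split; auto; split; [rewrite E in Hs; apply SS_app_iff in Hs; apply Hs|].
    split; auto. intros y; split; auto. intros Hy.
    assert (Hy' := RinG t y Ht Hy). rewrite E in Hy'. apply in_app_or in Hy' as [|Hy']; auto.
    exfalso; apply (H2 y); auto. }
  destruct (Hpre 0 ltac:(lia)) as [P [L2 [E0 [HPs [HPm _]]]]].
  assert (HPl : length P = r (S k)).
  { rewrite <- D3. apply NoDup_same_len; auto. apply (SS_NoDup lt); auto. }
  assert (Ht : forall t, t < nn (S k) ->
     G t = P ++ skipn (length P) (G t) /\
     length (skipn (length P) (G t)) = m k - r (S k) /\
     (forall z, In z (skipn (length P) (G t)) -> ~ In z R)).
  { intros t Htn. destruct (Hpre t Htn) as [L1 [L2' [Et [H1s [H1m H2]]]]].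
    assert (L1 = P) as ->.
    { apply (sorted_unique lt irr trn tot); auto. intros y; rewrite H1m, HPm; tauto. }
    assert (Hsk : skipn (length P) (G t) = L2').
    { rewrite Et, skipn_app, Nat.sub_diag, skipn_all; auto. }
    rewrite Hsk. split; auto. split; auto.
    destruct (D1 t Htn) as [_ Hlen]. rewrite Et, length_app in Hlen. lia. }
  exists P; split; auto; split; auto; split; auto; split; auto.
  set (Q := fun t => skipn (length P) (G t)).
  assert (HQs : forall t, t < nn (S k) -> StronglySorted lt (Q t)).
  { intros t Htn. assert (Hs := lvl_sorted k (G t) (D1 t Htn)).
    rewrite (proj1 (Ht t Htn)) in Hs. apply SS_app_iff in Hs; apply Hs. }
  assert (HQG : forall t z, t < nn (S k) -> In z (Q t) -> In z (G t) /\ ~ In z R).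
  { intros t z Htn Hz. split; [|apply (Ht t Htn); auto].
    rewrite (proj1 (Ht t Htn)); apply in_or_app; auto. }
  assert (Hcc : forall i, i <= nn (S k) -> StronglySorted lt (concat (map Q (seq 0 i)))).
  { induction i; intros Hi; [constructor|].
    rewrite ccat_S. apply SS_app_iff; split; [apply IHi; lia|split; [apply HQs; lia|]].
    intros a b Ha Hb. apply ccat_in in Ha as [t [Htl Ha]].
    apply (HQG t a) in Ha; [|lia]. apply (HQG i b) in Hb; [|lia].
    apply (D6 t i a b); tauto || lia. }
  apply (sorted_unique lt irr trn tot).
  - apply (lvl_sorted (S k)); auto.
  - apply SS_app_iff; split; auto; split; [apply Hcc; lia|].
    intros a b Ha Hb. apply ccat_in in Hb as [t [Htl Hb]]. apply (HQG t b) in Hb; auto.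
    apply (D5 t); tauto || (apply HPm; auto).
  - intros z; rewrite D7; split.
    + intros [i [Hi Hz]]. rewrite (proj1 (Ht i Hi)) in Hz. apply in_app_or in Hz as [Hz|Hz].
      * apply in_or_app; auto.
      * apply in_or_app; right; apply ccat_in; eauto.
    + intros Hz; apply in_app_or in Hz as [Hz|Hz].
      * exists 0; split; [lia|]. apply RinG; [lia|]. apply HPm; auto.
      * apply ccat_in in Hz as [t [Htl Hz]]. exists t; split; auto. apply (HQG t z); auto.
Qed.

Definition gXi (k p : nat) : Z :=
  if Nat.ltb p (r (S k)) then (-1)%Z else Z.of_nat ((p - r (S k)) / (m k - r (S k))).

Lemma Xi_rel_val x k v : Xi_rel lt FF m nn r x (S k) v -> v = gXi k (norm lt FF m x (S k)).
Proof.
  intros [[H _]|[k' [Ek [F [G [R [HF [Hx [HD Hv]]]]]]]]]; [discriminate|].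
  injection Ek as <-.
  destruct (decomp_struct k F G R HF HD) as [P [HPs [HPm [HPl [Ht EF]]]]].
  unfold gXi.
  destruct Hv as [[HxR ->]|[HxR [i [Hi [HxG ->]]]]].
  - apply HPm in HxR. apply in_split in HxR as [A [B EP]].
    rewrite (norm_pos (S k) F x A (B ++ concat (map (fun t => skipn (length P) (G t)) (seq 0 (nn (S k)))))); auto.
    + assert (length A < r (S k)) by (rewrite <- HPl, EP, length_app; simpl; lia).
      destruct (Nat.ltb_spec (length A) (r (S k))); auto; lia.
    + rewrite EF, EP, <- app_assoc; auto.
  - destruct (Ht i Hi) as [EG [HQl HQn]].
    assert (HxQ : In x (skipn (length P) (G i))).
    { rewrite EG in HxG. apply in_app_or in HxG as [H|H]; auto. exfalso; apply HxR, HPm; auto. }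
    apply in_split in HxQ as [A [B EQ]].
    destruct (ccat_split (fun t => skipn (length P) (G t)) i (nn (S k)) Hi) as [rest Erest].
    set (cc := concat (map (fun t => skipn (length P) (G t)) (seq 0 i))) in *.
    rewrite (norm_pos (S k) F x (P ++ cc ++ A) (B ++ rest)); auto.
    + assert (Hcl : length cc = i * (m k - r (S k))).
      { apply ccat_len. intros t Htl; apply (Ht t); lia. }
      assert (HAl : length A < m k - r (S k)) by (rewrite <- HQl, EQ, length_app; simpl; lia).
      rewrite !length_app, HPl, Hcl.
      destruct (Nat.ltb_spec (r (S k) + (i * (m k - r (S k)) + length A)) (r (S k))); [lia|].
      f_equal. replace (r (S k) + (i * (m k - r (S k)) + length A) - r (S k))
        with ((m k - r (S k)) * i + length A) by lia.
      pose proof (Nat.div_unique ((m k - r (S k)) * i + length A) (m k - r (S k)) i (length A)) as Hd.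
      rewrite <- Hd; auto; lia.
    + rewrite EF, Erest. simpl in EQ. rewrite EQ. rewrite <- !app_assoc. simpl. auto.
Qed.

Lemma Xi_exists x k : exists v, Xi_rel lt FF m nn r x k v.
Proof.
  destruct k as [|k]. { exists 0%Z; left; auto. }
  destruct (in_some_level x (S k)) as [F [HF Hx]].
  destruct (decomp k F HF) as [G [R HD]].
  pose proof HD as [_ [_ [_ [_ [_ [_ D7]]]]]].
  destruct (proj1 (D7 x) Hx) as [i [Hi HxG]].
  destruct (classic (In x R)) as [HR|HR].
  - exists (-1)%Z; right; exists k; split; auto; exists F, G, R.
    split; [exact HF|split; [exact Hx|split; [exact HD|]]]. left; auto.
  - exists (Z.of_nat i); right; exists k; split; auto; exists F, G, R.
    split; [exact HF|split; [exact Hx|split; [exact HD|]]].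
    right; split; auto; exists i; auto.
Qed.

Lemma Xi_spec x k : Xi_rel lt FF m nn r x k (Xi lt FF m nn r x k).
Proof. unfold Xi; apply epsilon_spec, Xi_exists. Qed.

Lemma Xi_val x k : Xi lt FF m nn r x (S k) = gXi k (norm lt FF m x (S k)).
Proof. apply Xi_rel_val, Xi_spec. Qed.

Lemma Xi_0 x : Xi lt FF m nn r x 0 = 0%Z.
Proof.
  destruct (Xi_spec x 0) as [[_ H]|[k' [H _]]]; auto; discriminate.
Qed.

Lemma tail_norm x k j : Xi lt FF m nn r x (S k) = Z.of_nat j ->
  r (S k) <= norm lt FF m x k < m k.
Proof.
  intros HX. destruct (Xi_spec x (S k)) as [[H _]|[k' [Ek [F [G [R [HF [Hx [HD Hv]]]]]]]]];
    [discriminate|]. injection Ek as <-.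
  rewrite HX in Hv.
  destruct Hv as [[_ Hv]|[HxR [i [Hi [HxG _]]]]]; [lia|].
  destruct (decomp_struct k F G R HF HD) as [P [HPs [HPm [HPl [Ht EF]]]]].
  destruct (Ht i Hi) as [EG [HQl HQn]].
  assert (HxQ : In x (skipn (length P) (G i))).
  { rewrite EG in HxG. apply in_app_or in HxG as [H|H]; auto. exfalso; apply HxR, HPm; auto. }
  apply in_split in HxQ as [A [B EQ]].
  pose proof HD as [D1 _].
  rewrite (norm_pos k (G i) x (P ++ A) B); auto.
  - assert (HAl : length A < m k - r (S k)) by (rewrite <- HQl, EQ, length_app; simpl; lia).
    rewrite length_app, HPl. lia.
  - rewrite EG at 1. rewrite EQ, <- app_assoc; auto.
Qed.

Lemma norm_inj k F x y : level FF m k F -> In x F -> In y F ->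
  norm lt FF m x k = norm lt FF m y k -> x = y.
Proof.
  intros HF Hx Hy E. apply in_split in Hx as [A [B EA]]. apply in_split in Hy as [A' [B' EA']].
  rewrite (norm_pos k F x A B), (norm_pos k F y A' B') in E; auto.
  eapply nth_error_pos_eq; eauto.
Qed.

Lemma Delta_agree x y l : Delta lt FF m x y = l ->
  forall j, j < l -> norm lt FF m x j = norm lt FF m y j.
Proof.
  intros HD. set (P := fun k => norm lt FF m x k <> norm lt FF m y k /\
                     forall j, j < k -> norm lt FF m x j = norm lt FF m y j).
  destruct (classic (exists k, P k)) as [Hex|Hno].
  - pose proof (epsilon_spec (inhabits 0) P Hex) as Hs. unfold Delta in HD. fold P in HD.
    rewrite HD in Hs. apply Hs.
  - intros j Hj. apply NNPP; intros Hne.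
    destruct (least_ex (fun k => norm lt FF m x k <> norm lt FF m y k)) as [k [Hk Hl]]; eauto.
    apply Hno; exists k; split; auto. intros i Hi; apply NNPP; apply Hl; auto.
Qed.


Lemma e_agree nE C x y l : (forall j, j < l -> norm lt FF m x j = norm lt FF m y j) ->
  forall k, k < l -> e_fun lt FF m nn r nE C x k = e_fun lt FF m nn r nE C y k.
Proof.
  intros Hn k Hk.
  assert (HX : Xi lt FF m nn r x k = Xi lt FF m nn r y k).
  { destruct k as [|k]; [rewrite !Xi_0; auto|]. rewrite !Xi_val, Hn; auto. }
  assert (HN : norm lt FF m x (Nat.pred k) = norm lt FF m y (Nat.pred k)) by (apply Hn; lia).
  unfold e_fun. rewrite HX, HN. reflexivity.
Qed.

Lemma E_uncountable nE C : fully_Delta_capturing lt FF m nn r ->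
  uncountable_set (fun f => exists a : T, f = e_fun lt FF m nn r nE C a).
Proof.
  intros Hcap [f Hf].
  set (e := e_fun lt FF m nn r nE C) in *.
  destruct (pigeon (fun _ : T => True) (fun a => f (e a)) (o1_uncountable lt Ho)) as [c Hc].
  set (S1 := fun s => exists a, (True /\ f (e a) = c) /\ s = [a]).
  assert (HSS : forall s, S1 s -> StronglySorted lt s).
  { intros s [a [_ ->]]; repeat constructor. }
  assert (HU : uncountable_set S1).
  { intros [g Hg]. apply Hc. exists (fun a => g [a]). intros x y Hx Hy E.
    assert (Hxy : [x] = [y]) by (apply Hg; auto; [exists x|exists y]; auto).
    injection Hxy; auto. }
  destruct (Hcap S1 HSS HU 0) as [l [Hl [D [HDS [HDinj Hdc]]]]].
  destruct Hdc as [H2 [mm [rr [R [Hlen [HRnd [HRl [HR [HRt [Htc [HXi HDl]]]]]]]]]]].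
  destruct (HDS 0 ltac:(lia)) as [a0 [[_ Ha0] E0]].
  destruct (HDS 1 ltac:(lia)) as [a1 [[_ Ha1] E1]].
  assert (Hne : a0 <> a1).
  { intros <-. assert (0 = 1) by (apply HDinj; try lia; congruence). lia. }
  assert (Hee : e a0 = e a1) by (apply Hf; eauto; congruence).
  assert (HR0 : R = []).
  { destruct R as [|x R']; auto. exfalso.
    destruct (proj2 (HR 0 1 x ltac:(lia) ltac:(lia) ltac:(lia)) (or_introl eq_refl)) as [Hx0 Hx1].
    rewrite E0 in Hx0; rewrite E1 in Hx1. destruct Hx0 as [<-|[]]; destruct Hx1 as [<-|[]]; auto. }
  subst R. simpl in HRl. subst rr.
  assert (X0 : Xi lt FF m nn r a0 l = 0%Z).
  { apply (proj2 (HXi 0 0 a0 ltac:(lia) ltac:(rewrite E0; auto))); lia. }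
  assert (X1 : Xi lt FF m nn r a1 l = 1%Z).
  { apply (proj2 (HXi 1 0 a1 ltac:(lia) ltac:(rewrite E1; auto))); lia. }
  assert (Hl' : e a0 l = e a1 l) by (rewrite Hee; auto).
  unfold e, e_fun in Hl'. rewrite X0, X1 in Hl'. simpl in Hl'.
  destruct (existsb _ _); [discriminate|]. destruct (_ && _)%bool; discriminate.
Qed.


Lemma main_ent nE C : fully_Delta_capturing lt FF m nn r -> valid_enum m nn r nE C ->
  entangled lex_lt (fun f => exists a : T, f = e_fun lt FF m nn r nE C a) (2 * nE).
Proof.
  intros Hcap Hve. split; [apply E_uncountable; auto|].
  set (e := e_fun lt FF m nn r nE C).
  set (E := fun f => exists a : T, f = e a).
  intros tau A HA Hdisj HU.
  destruct (Nat.eq_dec nE 0) as [Hn0|Hn0].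
  { exfalso. apply HU. exists (fun _ => 0). intros a b Ha Hb _.
    destruct (HA a Ha) as [La _], (HA b Hb) as [Lb _]. rewrite Hn0 in *.
    destruct a; destruct b; simpl in *; auto; lia. }
  set (N := 2 * nE).
  assert (t0 : inhabited T).
  { apply NNPP; intros Hn. apply (o1_uncountable lt Ho). exists (fun _ => 0).
    intros x; exfalso; apply Hn; constructor; auto. }
  set (dflt := fun _ : nat => 0%Z).
  set (ch := fun f : nat -> Z => epsilon t0 (fun a => f = e a)).
  assert (ch_spec : forall f, E f -> f = e (ch f)).
  { intros f Hf. apply (epsilon_spec t0 (fun a => f = e a)). exact Hf. }
  set (ords := fun a : list (nat -> Z) => map ch a).
  set (srt := fun a => epsilon (inhabits []) (fun s => StronglySorted lt s /\ forall x, In x s <-> In x (ords a))).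
  assert (srt_spec : forall a, StronglySorted lt (srt a) /\ forall x, In x (srt a) <-> In x (ords a)).
  { intros a. apply (epsilon_spec (inhabits []) (fun s => StronglySorted lt s /\ forall x, In x s <-> In x (ords a))).
    apply (sort_exists lt irr trn tot). }
  set (Kf := fun a => epsilon (inhabits 0) (fun K => exists F, level FF m K F /\ incl (srt a) F)).
  assert (Kf_spec : forall a, exists F, level FF m (Kf a) F /\ incl (srt a) F).
  { intros a. apply (epsilon_spec (inhabits 0) (fun K => exists F, level FF m K F /\ incl (srt a) F)).
    apply in_level_set. }
  set (fsel := fun a i => epsilon (inhabits 0) (fun j => nth_error (ords a) i = nth_error (srt a) j)).
  set (sg := fun a => map (fsel a) (seq 0 N)).
  assert (sg_spec : forall a i, A a -> i < N ->
             nth_error (ords a) i = nth_error (srt a) (nth i (sg a) 0)).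
  { intros a i Ha Hi.
    assert (Hnth : nth i (sg a) 0 = fsel a i).
    { unfold sg. rewrite (nth_indep _ 0 (fsel a 0)); [|rewrite length_map, length_seq; auto].
      rewrite map_nth, seq_nth; auto. }
    rewrite Hnth. unfold fsel.
    apply (epsilon_spec (inhabits 0) (fun j => nth_error (ords a) i = nth_error (srt a) j)).
    assert (Hl : i < length (ords a)) by (unfold ords; rewrite length_map; destruct (HA a Ha) as [-> _]; auto).
    destruct (nth_error (ords a) i) as [x|] eqn:Ex; [|apply nth_error_None in Ex; lia].
    assert (Hx : In x (srt a)) by (apply (proj2 (srt_spec a)); eapply nth_error_In; eauto).
    apply In_nth_error in Hx as [j Hj]. exists j; auto. }
  set (keyf := fun a => Cantor.to_nat (Kf a, encl (sg a))).
  destruct (pigeon A keyf HU) as [c HU'].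
  set (A' := fun a => A a /\ keyf a = c) in HU'.
  assert (key_eq : forall a b, A' a -> A' b -> Kf a = Kf b /\ sg a = sg b).
  { intros a b [_ Ha] [_ Hb]. rewrite <- Hb in Ha. unfold keyf in Ha.
    apply (f_equal Cantor.of_nat) in Ha. rewrite !Cantor.cancel_of_to in Ha.
    injection Ha as H1 H2. split; auto. apply encl_inj; auto. }
  assert (Hast : exists a, A' a).
  { apply NNPP; intros Hn. apply HU'. exists (fun _ => 0). intros a b Ha; exfalso; apply Hn; exists a; exact Ha. }
  destruct Hast as [ast Hast].
  set (K0 := Kf ast). set (sg0 := sg ast).
  assert (ords_disj : forall a b x, A a -> A b -> a <> b -> In x (srt a) -> ~ In x (srt b)).
  { intros a b x Ha Hb Hab Hxa Hxb.
    apply (proj2 (srt_spec a)) in Hxa. apply (proj2 (srt_spec b)) in Hxb.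
    apply in_map_iff in Hxa as [u [Hu Hua]]. apply in_map_iff in Hxb as [v [Hv Hvb]].
    assert (u = v).
    { rewrite (ch_spec u), (ch_spec v); [congruence| |].
      - apply (HA b Hb); auto.
      - apply (HA a Ha); auto. }
    subst v. apply (Hdisj a b Ha Hb Hab u); auto. }
  assert (srt_ne : forall a, A a -> exists x, In x (srt a)).
  { intros a Ha. destruct a as [|f a'].
    - destruct (HA [] Ha) as [L _]; simpl in L; lia.
    - exists (ch f). apply (proj2 (srt_spec _)). simpl; auto. }
  set (S1 := fun s => exists a, A' a /\ s = srt a).
  assert (HSS : forall s, S1 s -> StronglySorted lt s).
  { intros s [a [_ ->]]; apply srt_spec. }
  assert (HU1 : uncountable_set S1).
  { intros [g Hg]. apply HU'. exists (fun a => g (srt a)). intros a b Ha Hb Eg.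
    apply NNPP; intros Hne.
    assert (Es : srt a = srt b) by (apply Hg; auto; [exists a|exists b]; auto).
    destruct (srt_ne a (proj1 Ha)) as [x Hx].
    apply (ords_disj a b x (proj1 Ha) (proj1 Hb) Hne Hx). rewrite <- Es; auto. }
  destruct (Hcap S1 HSS HU1 K0) as [l [Hl [D [HDS [HDinj Hdc]]]]].
  destruct Hdc as [H2 [mm [rr [R [Hlen [HRnd [HRl [HR [HRt [Htc [HXi HDl]]]]]]]]]]].
  set (aj := fun j => epsilon (inhabits []) (fun a => A' a /\ D j = srt a)).
  assert (aj_spec : forall j, j < nn l -> A' (aj j) /\ D j = srt (aj j)).
  { intros j Hj. apply (epsilon_spec (inhabits []) (fun a => A' a /\ D j = srt a)).
    destruct (HDS j Hj) as [a [Ha Ea]]; eauto. }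
  assert (aj_neq : forall i j, i < nn l -> j < nn l -> i <> j -> aj i <> aj j).
  { intros i j Hi Hj Hij Ea. apply Hij, HDinj; auto.
    rewrite (proj2 (aj_spec i Hi)), (proj2 (aj_spec j Hj)), Ea; auto. }
  assert (HR0 : R = []).
  { destruct R as [|x R']; auto. exfalso.
    destruct (proj2 (HR 0 1 x ltac:(lia) ltac:(lia) ltac:(lia)) (or_introl eq_refl)) as [Hx0 Hx1].
    rewrite (proj2 (aj_spec 0 ltac:(lia))) in Hx0. rewrite (proj2 (aj_spec 1 ltac:(lia))) in Hx1.
    apply (ords_disj (aj 0) (aj 1) x); auto.
    - apply (aj_spec 0); lia.
    - apply (aj_spec 1); lia.
    - apply aj_neq; lia. }
  subst R. simpl in HRl. subst rr.
  destruct l as [|l']; [lia|].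
  assert (Hkey : forall j, j < nn (S l') -> Kf (aj j) = K0 /\ sg (aj j) = sg0).
  { intros j Hj. apply key_eq; auto. apply aj_spec; auto. }
  set (el := fun j i => ch (nth i (aj j) dflt)).
  assert (el_nth : forall j i, j < nn (S l') -> i < N -> nth_error (D j) (nth i sg0 0) = Some (el j i)).
  { intros j i Hj Hi. destruct (aj_spec j Hj) as [[HAj _] ->].
    rewrite <- (proj2 (Hkey j Hj)), <- sg_spec; auto.
    unfold ords. rewrite nth_error_map, (nth_error_nth' _ dflt); auto.
    destruct (HA _ HAj) as [-> _]; auto. }
  assert (el_e : forall j i, j < nn (S l') -> i < N -> e (el j i) = nth i (aj j) dflt).
  { intros j i Hj Hi. destruct (aj_spec j Hj) as [[HAj _] _]. symmetry. apply ch_spec.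
    apply (HA _ HAj). apply nth_In. destruct (HA _ HAj) as [-> _]; auto. }
  assert (el_Xi : forall j i, j < nn (S l') -> i < N -> Xi lt FF m nn r (el j i) (S l') = Z.of_nat j).
  { intros j i Hj Hi. apply (proj2 (HXi j (nth i sg0 0) (el j i) Hj (el_nth j i Hj Hi))). lia. }
  assert (el_agree : forall j j' i, j < nn (S l') -> j' < nn (S l') -> j <> j' -> i < N ->
            forall k, k < S l' -> norm lt FF m (el j i) k = norm lt FF m (el j' i) k).
  { intros j j' i Hj Hj' Hjj Hi. apply Delta_agree.
    apply (HDl j j' (nth i sg0 0)); auto; lia. }
  assert (el_inj : forall j i i', j < nn (S l') -> i < N -> i' < N -> el j i = el j i' -> i = i').
  { intros j i i' Hj Hi Hi' Ee.
    assert (Hv : nth i (aj j) dflt = nth i' (aj j) dflt).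
    { rewrite <- (el_e j i), <- (el_e j i'), Ee; auto. }
    destruct (aj_spec j Hj) as [[HAj _] _]. destruct (HA _ HAj) as [Hlj [Hs _]].
    assert (Hnd : NoDup (aj j)) by (apply (SS_NoDup lex_lt); auto; apply lex_irrefl).
    apply (proj1 (NoDup_nth (aj j) dflt)) in Hv; auto; lia. }
  destruct (Kf_spec (aj 0)) as [F0 [HF0 HiF0]].
  rewrite (proj1 (Hkey 0 ltac:(lia))) in HF0.
  destruct (up K0 l' F0 HF0 ltac:(lia)) as [F1 [HF1 HiF1]].
  assert (el_F1 : forall i, i < N -> In (el 0 i) F1).
  { intros i Hi. apply HiF1, HiF0. rewrite <- (proj2 (aj_spec 0 ltac:(lia))).
    eapply nth_error_In, el_nth; auto; lia. }
  set (pp := fun i => norm lt FF m (el 0 i) l').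
  assert (pp_range : forall i, i < N -> r (S l') <= pp i < m l').
  { intros i Hi. apply (tail_norm _ _ 0). apply el_Xi; auto; lia. }
  assert (pp_inj : forall i i', i < N -> i' < N -> pp i = pp i' -> i = i').
  { intros i i' Hi Hi' Ep. apply (el_inj 0); auto; [lia|].
    apply (norm_inj l' F1); auto. }
  destruct (argmin_ex pp N ltac:(lia)) as [i0 [Hi0 Hmin]].
  set (Pb := fun i => negb (tau i)).
  set (cP := length (filter Pb (seq 0 N))).
  set (choiceA := orb (Nat.ltb cP nE) (andb (Nat.eqb cP nE) (Pb i0))).
  set (Qb := fun i => if choiceA then Pb i else tau i).
  set (cQ := length (filter Qb (seq 0 N))).
  assert (Hcompl : cP + length (filter tau (seq 0 N)) = N).
  { unfold cP, Pb. rewrite <- (length_seq N 0) at 3.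
    rewrite <- (filter_compl_len (fun i => negb (tau i)) (seq 0 N)).
    f_equal. f_equal. apply filter_ext; intros; rewrite Bool.negb_involutive; auto. }
  assert (Qfacts : cQ <= nE /\ (cQ = nE -> Qb i0 = true)).
  { unfold cQ, Qb. destruct choiceA eqn:Hch; unfold choiceA in Hch.
    - change (length (filter (fun i => if true then Pb i else tau i) (seq 0 N))) with cP.
      change (if true then Pb i0 else tau i0) with (Pb i0).
      change (fun i : nat => Pb i) with Pb. fold cP.
      apply Bool.orb_true_iff in Hch as [H|H].
      + apply Nat.ltb_lt in H; split; lia.
      + apply Bool.andb_true_iff in H as [H1 H3]. apply Nat.eqb_eq in H1. split; [lia|auto].
    - change (length (filter (fun i => if false then Pb i else tau i) (seq 0 N))) with (length (filter tau (seq 0 N))).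
      change (if false then Pb i0 else tau i0) with (tau i0).
      change (fun i : nat => tau i) with tau.
      apply Bool.orb_false_iff in Hch as [H1 H3]. apply Nat.ltb_ge in H1.
      unfold Pb in H3. destruct (Nat.eqb_spec cP nE) as [Heq|Hneq].
      + simpl in H3. apply Bool.negb_false_iff in H3. split; [lia|auto].
      + split; lia. }
  set (Cl := filter (fun p => existsb (fun i => andb (Qb i) (Nat.eqb (pp i) p)) (seq 0 N)) (seq 0 (m l'))).
  assert (Cl_mem : forall p, In p Cl <-> exists i, i < N /\ Qb i = true /\ pp i = p).
  { intros p. unfold Cl. rewrite filter_In, existsb_exists. split.
    - intros [_ [i [Hi H]]]. apply Bool.andb_true_iff in H as [H1 H3]. apply in_seq in Hi.
      apply Nat.eqb_eq in H3. exists i; split; [lia|auto].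
    - intros [i [Hi [HQ <-]]]. split; [apply in_seq; pose proof (pp_range i Hi); lia|].
      exists i; split; [apply in_seq; lia|]. rewrite HQ, Nat.eqb_refl; auto. }
  assert (Cl_len : length Cl <= cQ).
  { unfold cQ. rewrite <- (length_map pp (filter Qb (seq 0 N))). apply NoDup_incl_length.
    - apply NoDup_filter, seq_NoDup.
    - intros p Hp. apply Cl_mem in Hp as [i [Hi [HQ <-]]]. apply in_map, filter_In.
      split; auto. apply in_seq; lia. }
  assert (Cl_small : small_subset m r nE l' Cl).
  { split; [apply SS_filter, SS_seq|split; [|lia]].
    intros p Hp. apply Cl_mem in Hp as [i [Hi [_ <-]]]. apply pp_range; auto. }
  set (pos := fun i => orb (existsb (Nat.eqb (pp i)) Cl)
         (andb (Nat.eqb (length Cl) nE) (forallb (fun c => Nat.ltb (pp i) c) Cl))).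
  assert (pos_Q : forall i, i < N -> pos i = Qb i).
  { intros i Hi. unfold pos. destruct (Qb i) eqn:HQ.
    - apply Bool.orb_true_iff; left. apply existsb_exists. exists (pp i); split.
      + apply Cl_mem; eauto.
      + apply Nat.eqb_refl.
    - apply Bool.orb_false_iff; split.
      + apply Bool.not_true_iff_false. intros H. apply existsb_exists in H as [p [Hp Hq]].
        apply Nat.eqb_eq in Hq. subst p. apply Cl_mem in Hp as [i' [Hi' [HQ' Ep]]].
        apply pp_inj in Ep; auto. subst i'. congruence.
      + apply Bool.not_true_iff_false. intros H. apply Bool.andb_true_iff in H as [H1 H3].
        apply Nat.eqb_eq in H1. assert (HQ0 : Qb i0 = true) by (apply Qfacts; lia).
        rewrite forallb_forall in H3. specialize (H3 (pp i0) (proj2 (Cl_mem _) (ex_intro _ i0 (conj Hi0 (conj HQ0 eq_refl))))).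
        apply Nat.ltb_lt in H3. specialize (Hmin i Hi). lia. }
  destruct (proj2 (Hve l') Cl Cl_small) as [d [Hd ECd]].
  assert (e0l : forall i, i < N -> e (el 0 i) (S l') = 0%Z).
  { intros i Hi. unfold e, e_fun. rewrite el_Xi; auto; lia. }
  assert (edl : forall i, i < N -> e (el d i) (S l') = if pos i then Z.of_nat d else (- Z.of_nat d)%Z).
  { intros i Hi. unfold e, e_fun. cbv zeta. rewrite el_Xi; auto; [|lia].
    replace (Z.leb (Z.of_nat d) 0) with false by (symmetry; apply Z.leb_gt; lia).
    rewrite Nat2Z.id. simpl Nat.pred. rewrite ECd.
    rewrite (el_agree d 0 i); auto; try lia.
    fold (pp i). unfold pos. destruct (existsb _ Cl); simpl; auto. }
  assert (ebelow : forall i, i < N -> forall k, k < S l' -> e (el 0 i) k = e (el d i) k).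
  { intros i Hi. apply e_agree. intros k Hk. apply el_agree; auto; lia. }
  assert (HA0 : A (aj 0)) by (apply (aj_spec 0); lia).
  assert (HAd : A (aj d)) by (apply (aj_spec d); lia).
  assert (Hxv : forall j i x, j < nn (S l') -> i < N -> nth_error (aj j) i = Some x -> x = e (el j i)).
  { intros j i x Hj Hi Hx. rewrite el_e; auto. symmetry; apply nth_error_nth; auto. }
  destruct choiceA eqn:Hch.
  - exists (aj 0), (aj d). split; auto; split; auto; split; [apply aj_neq; lia|].
    intros i x y Hi Hx Hy. rewrite (Hxv 0 i x), (Hxv d i y); auto; try lia.
    assert (HQ := pos_Q i Hi). unfold Qb in HQ. unfold Pb in HQ.
    destruct (pos i) eqn:Hp.
    + assert (Ht : tau i = false) by (destruct (tau i); auto; discriminate).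
      rewrite Ht. split; auto. intros _.
      apply (lex_decide _ _ (S l')); [apply ebelow; auto|]. rewrite e0l, edl, Hp; auto. lia.
    + assert (Ht : tau i = true) by (destruct (tau i); auto; discriminate).
      rewrite Ht. split; [|discriminate]. intros Hlt; exfalso.
      refine (proj2 (lex_decide (e (el d i)) (e (el 0 i)) (S l') _ _) Hlt).
      * intros k Hk; symmetry; apply ebelow; auto.
      * rewrite e0l, edl, Hp; auto. lia.
  - exists (aj d), (aj 0). split; auto; split; auto; split; [apply aj_neq; lia|].
    intros i x y Hi Hx Hy. rewrite (Hxv d i x), (Hxv 0 i y); auto; try lia.
    assert (HQ := pos_Q i Hi). unfold Qb in HQ. idtac.
    destruct (pos i) eqn:Hp.
    + rewrite <- HQ. split; [|discriminate]. intros Hlt; exfalso.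
      refine (proj2 (lex_decide (e (el 0 i)) (e (el d i)) (S l') _ _) Hlt).
      * intros k Hk; apply ebelow; auto.
      * rewrite e0l, edl, Hp; auto. lia.
    + rewrite <- HQ. split; auto. intros _.
      apply (lex_decide _ _ (S l')); [intros k Hk; symmetry; apply ebelow; auto|].
      rewrite e0l, edl, Hp; auto. lia.
Qed.

End Scheme.

Theorem mainTheorem6 (T : Type) (lt : T -> T -> Prop) (nE : nat)
  (m nn r : nat -> nat) (FF : list T -> Prop) (C : nat -> nat -> list nat) :
  is_omega1 lt ->
  construction_scheme lt m nn r FF ->
  fully_Delta_capturing lt FF m nn r ->
  (forall k, 2 ^ m k <= nn (S k)) ->
  valid_enum m nn r nE C ->
  entangled lex_lt (fun f => exists a : T, f = e_fun lt FF m nn r nE C a) (2 * nE).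
Proof.
  intros Ho Hcs Hcap _ Hve. eapply main_ent; eauto.
Qed.
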